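(* Let $p$ be a prime and let $G$ be a non-cyclic finite abelian $p$-group of exponent $\exp(G)=p^{\alpha}$, where $\alpha\ge 2$. Then $n_G\ge p^{\alpha+1}-p^{\alpha}+p^{\alpha-1}$. As a consequence, $n_G>\exp(G)$.
   Context: For a finite group $G$ and $x\in G$, let $I_{\mathcal C}(x)=\{y\in G : \langle x,y\rangle \text{ is cyclic}\}$. For a nontrivial finite group $G$, $n_G=\max\{|I_{\mathcal C}(x)| : x\in G\setminus\{1\}\}$. *)

(* Defs.v *)
From mathcomp Require Import all_boot all_fingroup all_solvable.
Set Implicit Arguments. Unset Strict Implicit. Unset Printing Implicit Defensive.
Local Open Scope group_scope.

Definition cyclicizer (gT : finGroupType) (G : {set gT}) (x : gT) : {set gT} :=
  [set y in G | cyclic <<[set x; y]>>].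

Definition nG (gT : finGroupType) (G : {set gT}) : nat :=
  \max_(x in G^#) #|cyclicizer G x|.

(* Main.v *)
Require Import Defs.
From mathcomp Require Import all_boot all_fingroup all_solvable.
From mathcomp Require Import zify.
Local Open Scope group_scope.

Lemma key (gT : finGroupType) (G : {group gT}) (p k : nat) (g h : gT) :
  prime p -> abelian G -> g \in G -> h \in G -> #[g] = (p ^ k.+2)%N -> #[h] = p ->
  h \notin <[g]> ->
  (p ^ k.+3 - p ^ k.+2 + p ^ k.+1 <= nG G)%N.
Proof.
move=> pp abG gG hG og oh hng.
have p1 : (1 < p)%N by apply: prime_gt1.
set x := g ^+ (p ^ k.+1).
have ox : #[x] = p.
  rewrite /x orderXdiv og; last by rewrite dvdn_exp2l.
  by rewrite expnS mulnK // expn_gt0 ltnW.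
set gp := g ^+ p.
have ogp : #[gp] = (p ^ k.+1)%N.
  rewrite /gp orderXdiv og; last by rewrite expnS (dvdn_mulr _ (dvdnn p)).
  by rewrite expnS mulKn // ltnW.
have TIh : forall a : {group gT}, a \subset <[g]> -> <[h]> :&: a = 1.
  move=> a sa; apply: prime_TIg; first by rewrite -orderE oh.
  apply: contra hng => sha; apply: (subsetP (subset_trans sha sa)); exact: cycle_id.
set H := (<[g]> * <[h]>)%g.
set M := (<[gp]> * <[h]>)%g.
have cH : #|H| = (p ^ k.+3)%N.
  rewrite /H TI_cardMg; last by rewrite setIC TIh.
  by rewrite -!orderE og oh -expnSr.
have cM : #|M| = (p ^ k.+2)%N.
  rewrite /M TI_cardMg; last by rewrite setIC TIh // cycleX.
  by rewrite -!orderE ogp oh -expnSr.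
have sMH : M \subset H by rewrite /M /H mulSg // cycleX.
have sHG : H \subset G.
  by rewrite /H -(mulGid G) mulgSS // cycle_subG.
have cgh : commute g h by apply: (centsP abG).
have xG1 : x \in G^#.
  rewrite !inE groupX // andbT -order_eq1 ox.
  by apply/eqP=> e; rewrite e in p1.
have sgG : <[g]> \subset G by rewrite cycle_subG.
have sgpg : <[gp]> \subset <[g]> by rewrite cycleX.
have xg : x \in <[g]> by rewrite mem_cycle.
have sub : (H :\: M) :|: <[gp]> \subset cyclicizer G x.
  apply/subsetP=> y; rewrite !inE => /orP [/andP [yM yH] | ygp].
    rewrite (subsetP sHG) //=.
    move: yM; case/mulsgP: yH => a b ain bin ->.
    case/cycleP: ain => i ->; case/cycleP: bin => j -> nM.
    have npi : ~~ (p %| i).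
      apply: contra nM => /dvdnP [q ->].
      by rewrite mulnC expgM mem_mulg // ?mem_cycle.
    have yx : (g ^+ i * h ^+ j) ^+ (p ^ k.+1) = x ^+ i.
      rewrite expgMn; last by apply: commuteX2.
      have -> : (h ^+ j) ^+ (p ^ k.+1) = 1.
        apply/eqP; rewrite -order_dvdn.
        apply: dvdn_trans (order_dvdG (mem_cycle h j)) _.
        by rewrite -orderE oh expnS dvdn_mulr.
      by rewrite mulg1 /x -!expgM mulnC.
    apply: cyclicS (cycle_cyclic (g ^+ i * h ^+ j)).
    rewrite gen_subG subUset !sub1set cycle_id andbT.
    have cxi : <[x]> = <[x ^+ i]>.
      apply/eqP; move: (generator_coprime x i); rewrite /generator => ->; rewrite ox.
      by rewrite prime_coprime.
    rewrite -cycle_subG cxi -yx; exact: cycleX.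
  rewrite (subsetP sHG) /=; last first.
    by rewrite (subsetP (mulG_subl _ _)) // (subsetP sgpg).
  apply: cyclicS (cycle_cyclic g).
  by rewrite gen_subG subUset !sub1set xg (subsetP sgpg).
apply: leq_trans (leq_bigmax_cond _ xG1).
apply: leq_trans (subset_leq_card sub).
rewrite cardsU cardsD (setIidPr sMH) cH cM -orderE ogp.
have -> : (H :\: M) :&: <[gp]> = set0.
  apply/setP=> y; rewrite !inE.
  case ygp: (y \in <[gp]>); rewrite ?andbF ?andbT //.
  by rewrite (subsetP (mulG_subl _ _)) //.
by rewrite cards0 subn0.
Qed.

Theorem lemma2p4 (gT : finGroupType) (G : {group gT}) (p alpha : nat) :
  prime p -> p.-group G -> abelian G -> ~~ cyclic G ->
  exponent G = (p ^ alpha)%N -> (2 <= alpha)%N ->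
  (p ^ alpha.+1 - p ^ alpha + p ^ alpha.-1 <= nG G)%N /\ (exponent G < nG G)%N.
Proof.
move=> pp pG abG ncG eG.
case: alpha eG => [|[|k]] eG // _.
have p1 : (1 < p)%N by apply: prime_gt1.
have [g gG og] := exponent_witness (pgroup_nil pG).
rewrite eG in og.
have : (2 <= 'r_p(G))%N.
  by rewrite -(rank_pgroup pG) ltnNge -abelian_rank1_cyclic.
case/p_rank_geP => E /pnElemP [sEG abE lE].
have : ~~ (E \subset <[g]>).
  apply/negP => sEg.
  have := cyclicS sEg (cycle_cyclic g).
  by rewrite (abelem_cyclic abE) lE.
case/subsetPn => h hE hng.
have h1 : h != 1 by apply: contra hng => /eqP ->; exact: group1.
have oh := abelem_order_p abE hE h1.
have K := @key _ G p k g h pp abG gG (subsetP sEG h hE) (esym og) oh hng.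
split=> //; rewrite eG; apply: leq_trans K.
have r1 : (0 < p ^ k)%N by rewrite expn_gt0 ltnW.
rewrite !expnSr.
set r := (p ^ k)%N in r1 *.
have h2 : (r * p * p * 1 < r * p * p * p - r * p * p + r * p)%N.
  have a : (r * p * p <= r * p * p * p)%N by rewrite leq_pmulr // ltnW.
  rewrite -(subnK a) -addnBA // ?addnK.
  have -> : (r * p * p * p - r * p * p = r * p * p * (p - 1))%N by rewrite mulnBr muln1.
  nia.
by rewrite muln1 in h2.
Qed.
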